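(* Let $V$ be a vector space over a field $F$ and $T\in OP(V)$. If $T$ has a vanishing polynomial, then there exists a unique monic polynomial $p_m\in F[x]$ of minimal degree among vanishing polynomials of $T$, and $p_m$ divides every vanishing polynomial of $T$.
   Context: $OP(V)$ is the set of all (not necessarily linear) maps $V\to V$, with pointwise addition and scalar multiplication, and composition as product; $T^0=I$ (identity), $T^{i}=T\circ T^{i-1}$. For $p(x)=\sum_{i=0}^m a_ix^i\in F[x]$, $p(T)$ is the map $v\mapsto\sum_{i=0}^m a_iT^i(v)$. A polynomial $p\in F[x]$ is a vanishing polynomial of $T$ if $p\neq0$ and $p(T)(v)=0$ for all $v\in V$. *)

(* Defs.v *)
From HB Require Import structures.
From mathcomp Require Import all_boot all_order all_algebra.
Set Implicit Arguments. Unset Strict Implicit. Unset Printing Implicit Defensive.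
Import GRing.Theory.
Local Open Scope ring_scope.

(* OP(V): arbitrary (not necessarily linear) maps V -> V.
   T^i := i-fold composition (T^0 = identity). *)
Definition op_pow (F : fieldType) (V : lmodType F) (T : V -> V) (i : nat) : V -> V :=
  fun v => iter i T v.

Definition poly_op (F : fieldType) (V : lmodType F) (p : {poly F}) (T : V -> V) : V -> V :=
  fun v => \sum_(i < size p) p`_i *: op_pow T i v.

Definition vanishing (F : fieldType) (V : lmodType F) (T : V -> V) (p : {poly F}) : Prop :=
  p != 0 /\ forall v : V, poly_op p T v = 0.

Definition min_vanishing (F : fieldType) (V : lmodType F) (T : V -> V) (p : {poly F}) : Prop :=
  vanishing T p /\ forall q : {poly F}, vanishing T q -> (size p <= size q)%N.

(* Main.v *)
Require Import Defs.
From mathcomp Require Import all_boot all_order all_algebra.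
From Stdlib Require Import Classical.
From mathcomp Require Import zify.
Local Open Scope ring_scope.
Import GRing.Theory.
Set Implicit Arguments. Unset Strict Implicit.

Section S.
Variables (F : fieldType) (V : lmodType F) (T : V -> V).

Lemma poly_opE (p : {poly F}) v n : (size p <= n)%N ->
  poly_op p T v = \sum_(i < n) p`_i *: iter i T v.
Proof.
move=> hn; rewrite /poly_op /op_pow.
rewrite (big_ord_widen n (fun i => p`_i *: iter i T v)) // big_mkcond.
apply: eq_bigr => i _; case: ifP => // /negbT; rewrite -leqNgt => h.
by rewrite nth_default // scale0r.
Qed.

Lemma poly_opD (p q : {poly F}) v :
  poly_op (p + q) T v = poly_op p T v + poly_op q T v.
Proof.
set n := (size (p + q)%R + size p + size q)%N.
rewrite (poly_opE (p:=p+q) v (n:=n)) ?(poly_opE (p:=p) v (n:=n)) ?(poly_opE (p:=q) v (n:=n));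
  try (rewrite /n; lia).
by rewrite -big_split /=; apply: eq_bigr => i _; rewrite coefD scalerDl.
Qed.

Lemma poly_opZ c (p : {poly F}) v :
  poly_op (c *: p) T v = c *: poly_op p T v.
Proof.
rewrite (poly_opE (p:=c *: p) v (n:=size p)) ?size_scale_leq // /poly_op scaler_sumr.
by apply: eq_bigr => i _; rewrite coefZ scalerA.
Qed.

Lemma poly_opB (p q : {poly F}) v :
  poly_op (p - q) T v = poly_op p T v - poly_op q T v.
Proof.
have := poly_opD (p - q) q v; rewrite subrK => ->; by rewrite addrK.
Qed.

Lemma poly_opMX (r : {poly F}) v :
  poly_op (r * 'X) T v = poly_op r T (T v).
Proof.
rewrite (poly_opE (p:=r * 'X) v (n:=(1 + size r)%N)); last first.
  by apply: leq_trans (size_polyMleq _ _) _; rewrite size_polyX addnC.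
rewrite big_split_ord /= big_ord1 coefMX /= scale0r add0r /poly_op /op_pow.
apply: eq_bigr => i _; rewrite coefMX /= -iterSr.
by congr (_ *: _).
Qed.

Lemma poly_opM (q r : {poly F}) : (forall v, poly_op r T v = 0) ->
  forall v, poly_op (q * r) T v = 0.
Proof.
elim/poly_ind: q r => [|q c IH] r hr v.
  by rewrite mul0r /poly_op size_poly0 big_ord0.
rewrite mulrDl -mulrA (mulrC 'X) poly_opD IH; last by move=> w; rewrite poly_opMX hr.
by rewrite mul_polyC poly_opZ hr scaler0 add0r.
Qed.

Lemma exists_min n (p : {poly F}) : vanishing T p -> (size p <= n)%N ->
  exists pm, min_vanishing T pm.
Proof.
elim: n p => [|n IH] p hp hs.
  by case: hp => hp0 _; move: hs; rewrite leqn0 size_poly_eq0 (negbTE hp0).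
case: (classic (exists q, vanishing T q /\ (size q < size p)%N)).
  by case=> q [hq hqs]; apply: (IH q hq); rewrite -ltnS; apply: leq_trans hqs hs.
move=> hn; exists p; split => // q hq; rewrite leqNgt; apply/negP => h.
by apply: hn; exists q.
Qed.

Lemma min_dvd (r q : {poly F}) : min_vanishing T r -> vanishing T q -> r %| q.
Proof.
move=> [[r0 rv] rmin] [hq0 hqv]; apply/modp_eq0P; apply/eqP; apply: contraT => hr.
have : vanishing T (q %% r).
  split => // v.
  have -> : q %% r = q - (q %/ r) * r by rewrite {2}(divp_eq q r) [_ * _ + _]addrC addrK.
  by rewrite poly_opB hqv (poly_opM _ rv) subr0.
by move/rmin; rewrite leqNgt ltn_modp r0.
Qed.

End S.

Theorem mainTheorem13 (F : fieldType) (V : lmodType F) (T : V -> V) :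
  (exists p : {poly F}, vanishing T p) ->
  exists pm : {poly F},
    [/\ pm \is monic /\ min_vanishing T pm,
        (forall q : {poly F}, q \is monic -> min_vanishing T q -> q = pm)
      & (forall q : {poly F}, vanishing T q -> pm %| q)].
Proof.
case=> p hp; have [p0 [[hp0 hv] hmin]] := exists_min hp (leqnn _).
have hl : lead_coef p0 != 0 by rewrite lead_coef_eq0.
set pm := (lead_coef p0)^-1 *: p0.
have pmm : pm \is monic.
  by apply/monicP; rewrite /pm lead_coefZ mulVf.
have spm : size pm = size p0 by rewrite /pm size_scale // invr_eq0.
have pm0 : pm != 0 by rewrite -size_poly_eq0 spm size_poly_eq0.
have vpm : forall v, poly_op pm T v = 0 by move=> v; rewrite poly_opZ hv scaler0.
have mpm : min_vanishing T pm by split; [split|move=> q hq; rewrite spm hmin].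
exists pm; split => //.
  move=> q qm qmin; apply/eqP; rewrite -eqp_monic //; apply/andP; split; [exact: (min_dvd qmin mpm.1) | exact: (min_dvd mpm qmin.1)].
by move=> q; apply: min_dvd.
Qed.
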